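(* Consider the queueing system in the context under MaxWeight with a diagonal matrix $\Delta$ with positive diagonal entries, in overload ($\rho\notin\mathcal{P}$). Let $H=\limsup_{t\to\infty}\langle \frac{X(t)}{t},\Delta\frac{X(t)}{t}\rangle$ and let $\eta$ be the limit of $X(t_c)/t_c$ along an increasing unbounded sequence $\{t_c\}$ with $\langle\eta,\Delta\eta\rangle=H$. Then for any increasing unbounded sequence $\{t_m\}$ with $\lim_{m\to\infty}X(t_m)/t_m=\mu$, $$\langle\mu,\Delta\eta\rangle\ge\langle\rho,\Delta\eta\rangle-\max_{S\in\mathcal{S}}\langle S,\Delta\eta\rangle.$$
   Context: Model: $Q$ queues, finite set $\mathcal{S}=\{S_1,\dots,S_N\}\subset\mathbb{R}^Q_{\ge0}$, discrete time. Arrivals $A(t)$ with $0\le A_q(t)\le\bar A_q<\infty$ and $\rho_q=\lim_{t\to\infty}\frac1t\sum_{s=0}^{t-1}A_q(s)\in(0,\infty)$. Departures $D_q(t)=\min\{S_q(t),X_q(t)\}$, $X(t+1)=X(t)+A(t)-D(t)$, $X(0)=0$, with $S(t)\in\arg\max_{S\in\mathcal{S}}\langle S,\Delta X(t)\rangle$. Stability region $\mathcal{P}=\{r\in\mathbb{R}^Q_{\ge0}: r\le\sum_n\alpha_nS_n\text{ for some }\alpha_n\ge0,\sum_n\alpha_n=1\}$. *)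

(* Defs.v *)
From Stdlib Require Import Reals List.
From Coquelicot Require Import Coquelicot.
Open Scope R_scope.

(* Vectors in R^Q are functions nat -> R; only the coordinates q < Q matter. *)
Definition vsum (Q : nat) (f : nat -> R) : R :=
  fold_right Rplus 0 (map f (seq 0 Q)).

Definition inner (Q : nat) (u v : nat -> R) : R := vsum Q (fun q => u q * v q).

(* Diagonal matrix Delta = diag(d) applied to a vector. *)
Definition diagmul (d : nat -> R) (v : nat -> R) : nat -> R := fun q => d q * v q.

Definition vscale (c : R) (v : nat -> R) : nat -> R := fun q => c * v q.

Definition in_stab_region (Q : nat) (Ss : list (nat -> R)) (r : nat -> R) : Prop :=
  (forall q, (q < Q)%nat -> 0 <= r q) /\
  exists alpha : nat -> R,
    (forall n, (n < length Ss)%nat -> 0 <= alpha n) /\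
    vsum (length Ss) alpha = 1 /\
    forall q, (q < Q)%nat ->
      r q <= vsum (length Ss) (fun n => alpha n * nth n Ss (fun _ => 0) q).

Definition incr_unbounded (t : nat -> nat) : Prop :=
  (forall m, (t m <= t (S m))%nat) /\ (forall N, exists m, (N <= t m)%nat).

Definition scaled_lim (Q : nat) (X : nat -> nat -> R) (t : nat -> nat) (mu : nat -> R) : Prop :=
  forall q, (q < Q)%nat -> is_lim_seq (fun m => X (t m) q / INR (t m)) (mu q).

(* Main.v *)
Require Import Defs.
From Stdlib Require Import Reals List Lra Lia.
From Coquelicot Require Import Coquelicot.
Open Scope R_scope.

Section Aux.
Definition fr (l : list nat) (f : nat -> R) := fold_right Rplus 0 (map f l).

Lemma fr_ext l f g : (forall q, In q l -> f q = g q) -> fr l f = fr l g.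
Proof. induction l; simpl; intros H; auto. unfold fr in *; simpl. rewrite H, IHl; auto. Qed.
Lemma fr_le l f g : (forall q, In q l -> f q <= g q) -> fr l f <= fr l g.
Proof. induction l; simpl; intros H. unfold fr; simpl; lra. unfold fr in *; simpl.
  assert (H1 := H a (or_introl eq_refl)). assert (fold_right Rplus 0 (map f l) <= fold_right Rplus 0 (map g l)) by auto. lra. Qed.
Lemma fr_plus l f g : fr l (fun q => f q + g q) = fr l f + fr l g.
Proof. induction l; unfold fr in *; simpl. lra. rewrite IHl; lra. Qed.
Lemma fr_minus l f g : fr l (fun q => f q - g q) = fr l f - fr l g.
Proof. induction l; unfold fr in *; simpl. lra. rewrite IHl; lra. Qed.
Lemma fr_scal l c f : fr l (fun q => c * f q) = c * fr l f.
Proof. induction l; unfold fr in *; simpl. lra. rewrite IHl; lra. Qed.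
Lemma fr_lim l (u : nat -> nat -> R) (L : nat -> R) : (forall q, In q l -> is_lim_seq (fun n => u n q) (L q)) ->
  is_lim_seq (fun n => fr l (u n)) (fr l L).
Proof. induction l; unfold fr in *; simpl; intros H.
  apply is_lim_seq_const. apply is_lim_seq_plus'; auto.
  Qed.
Lemma fr_max {T} (l : list T) (f : T -> R) a x : In x l -> f x <= fold_right Rmax a (map f l).
Proof. induction l; simpl; intros H. contradiction. destruct H as [<-|H].
  apply Rmax_l. eapply Rle_trans; [apply IHl; auto | apply Rmax_r]. Qed.
End Aux.

Fixpoint cumA (A : nat -> nat -> R) (t q : nat) : R :=
  match t with O => 0 | S t => cumA A t q + A t q end.

Lemma cumA_sum A q k : cumA A (S k) q = sum_n (fun s => A s q) k.
Proof. induction k. simpl. rewrite sum_O; lra.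
  rewrite sum_Sn. change (cumA A (S (S k)) q) with (cumA A (S k) q + A (S k) q).
  rewrite IHk. reflexivity. Qed.

Lemma ev_ge (T : nat -> nat) : incr_unbounded T -> forall N, eventually (fun m => (N <= T m)%nat).
Proof. intros [Hm Hu] N. destruct (Hu N) as [m0 H0]. exists m0. intros n Hn.
  induction Hn; auto. specialize (Hm m). lia. Qed.

Theorem lemma4
  (Q : nat)
  (Ss : list (nat -> R))                  (* the finite schedule set S_1..S_N *)
  (A : nat -> nat -> R)                   (* arrivals A(t)_q = A t q *)
  (Abar rho : nat -> R)
  (d : nat -> R)                          (* Delta = diag(d) *)
  (Sch : nat -> nat -> R)                 (* chosen schedule S(t) *)
  (X : nat -> nat -> R)                   (* queue lengths X(t) *)
  (eta mu : nat -> R) (tc tm : nat -> nat)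
  (HSne : Ss <> nil)
  (HSnn : forall S, In S Ss -> forall q, (q < Q)%nat -> 0 <= S q)
  (HA : forall t q, (q < Q)%nat -> 0 <= A t q <= Abar q)
  (Hrho_lim : forall q, (q < Q)%nat ->
      is_lim_seq (fun t => / INR (S t) * sum_n (fun s => A s q) t) (rho q))
  (Hrho_pos : forall q, (q < Q)%nat -> 0 < rho q)
  (Hd : forall q, (q < Q)%nat -> 0 < d q)
  (HX0 : forall q, X 0%nat q = 0)
  (HXstep : forall t q, X (S t) q = X t q + A t q - Rmin (Sch t q) (X t q))
  (HSin : forall t, In (Sch t) Ss)
  (HMW : forall t S, In S Ss -> inner Q S (diagmul d (X t)) <= inner Q (Sch t) (diagmul d (X t)))
  (Hover : ~ in_stab_region Q Ss rho)
  (Htc : incr_unbounded tc)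
  (Heta : scaled_lim Q X tc eta)
  (HH : LimSup_seq (fun t => inner Q (vscale (/ INR t) (X t))
                                     (diagmul d (vscale (/ INR t) (X t))))
        = Finite (inner Q eta (diagmul d eta)))
  (Htm : incr_unbounded tm)
  (Hmu : scaled_lim Q X tm mu) :
  inner Q mu (diagmul d eta) >=
    inner Q rho (diagmul d eta)
    - fold_right Rmax (inner Q (hd (fun _ => 0) Ss) (diagmul d eta))
        (map (fun S => inner Q S (diagmul d eta)) Ss).
Proof.
  set (w := diagmul d eta).
  set (M := fold_right Rmax _ _).
  assert (HinQ : forall q, In q (seq 0 Q) -> (q < Q)%nat).
  { intros q Hq. apply in_seq in Hq. lia. }
  assert (Xnn : forall t q, (q < Q)%nat -> 0 <= X t q).
  { induction t; intros q Hq. rewrite HX0; lra. rewrite HXstep.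
    specialize (IHt q Hq). specialize (HA t q Hq). pose proof (Rmin_r (Sch t q) (X t q)). lra. }
  assert (INRinv : forall n, 0 <= / INR n).
  { intros n. destruct n. simpl. rewrite Rinv_0; lra.
    apply Rlt_le, Rinv_0_lt_compat, lt_0_INR; lia. }
  assert (etann : forall q, (q < Q)%nat -> 0 <= eta q).
  { intros q Hq. assert (H : Rbar_le 0 (eta q)).
    { apply (is_lim_seq_le (fun _ => 0) (fun m => X (tc m) q / INR (tc m))).
      intros n; apply Rmult_le_pos; [apply Xnn; auto| apply INRinv].
      apply is_lim_seq_const. apply Heta; auto. }
    exact H. }
  assert (wnn : forall q, (q < Q)%nat -> 0 <= w q).
  { intros q Hq; unfold w, diagmul. apply Rmult_le_pos; [apply Rlt_le, Hd|apply etann]; auto. }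
  assert (HM : forall t, inner Q (Sch t) w <= M).
  { intros t. unfold M. apply (fr_max Ss (fun S => inner Q S w)). apply HSin. }
  assert (key : forall t, inner Q (X t) w >= fr (seq 0 Q) (fun q => cumA A t q * w q) - INR t * M).
  { induction t.
    - unfold inner, vsum. change (fold_right Rplus 0 (map (fun q => X 0%nat q * w q) (seq 0 Q))) with (fr (seq 0 Q) (fun q => X 0%nat q * w q)).
      rewrite (fr_ext _ (fun q => X 0%nat q * w q) (fun q => 0 * w q)) by (intros; rewrite HX0; auto).
      change (fr (seq 0 Q) (fun q => cumA A 0 q * w q)) with (fr (seq 0 Q) (fun q => 0 * w q)).
      rewrite fr_scal. simpl. lra.
    - unfold inner, vsum in *. fold (fr (seq 0 Q) (fun q => X (S t) q * w q)) in *.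
      fold (fr (seq 0 Q) (fun q => X t q * w q)) in *.
      fold (fr (seq 0 Q) (fun q => Sch t q * w q)) in HM.
      rewrite (fr_ext _ _ (fun q => (X t q * w q + A t q * w q) - Rmin (Sch t q) (X t q) * w q))
        by (intros; rewrite HXstep; ring).
      rewrite (fr_ext _ (fun q => cumA A (S t) q * w q) (fun q => cumA A t q * w q + A t q * w q))
        by (intros; simpl; ring).
      rewrite fr_minus, !fr_plus.
      assert (fr (seq 0 Q) (fun q => Rmin (Sch t q) (X t q) * w q) <= fr (seq 0 Q) (fun q => Sch t q * w q)).
      { apply fr_le. intros q Hq. apply Rmult_le_compat_r. apply wnn; auto. apply Rmin_l. }
      specialize (HM t). rewrite S_INR. unfold fr in *. lra. }
  set (T := tm).
  assert (LA : is_lim_seq (fun m => fr (seq 0 Q) (fun q => X (T m) q / INR (T m) * w q)) (inner Q mu w)).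
  { apply (fr_lim _ (fun m q => X (T m) q / INR (T m) * w q) (fun q => mu q * w q)).
    intros q Hq. apply (is_lim_seq_scal_r _ (w q) (mu q)). apply Hmu; auto. }
  assert (Lc : forall q, (q < Q)%nat -> is_lim_seq (fun m => cumA A (T m) q / INR (T m)) (rho q)).
  { intros q Hq. eapply is_lim_seq_ext_loc.
    2:{ apply (is_lim_seq_subseq (fun t => / INR (S t) * sum_n (fun s => A s q) t) _ (fun m => pred (T m))). 2: apply (Hrho_lim q Hq).
        intros P [N HN]. destruct (ev_ge T Htm (S N)) as [m0 H0]. exists m0. intros n Hn.
        apply HN. specialize (H0 n Hn). lia. }
    destruct (ev_ge T Htm 1) as [m0 H0]. exists m0. intros n Hn. specialize (H0 n Hn).
    destruct (T n) as [|k] eqn:E. lia. simpl pred. rewrite cumA_sum. unfold Rdiv. ring. }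
  assert (LB : is_lim_seq (fun m => fr (seq 0 Q) (fun q => cumA A (T m) q / INR (T m) * w q) - / INR (T m) * INR (T m) * M) (inner Q rho w - M)).
  { apply is_lim_seq_minus'.
    - apply (fr_lim _ (fun m q => cumA A (T m) q / INR (T m) * w q) (fun q => rho q * w q)).
      intros q Hq. apply (is_lim_seq_scal_r _ (w q) (rho q)). apply Lc; auto.
    - eapply is_lim_seq_ext_loc.
      2: apply (is_lim_seq_const M).
      destruct (ev_ge T Htm 1) as [m0 H0]. exists m0. intros n Hn. specialize (H0 n Hn).
      field. apply not_0_INR. lia. }
  assert (Hle : forall m, fr (seq 0 Q) (fun q => cumA A (T m) q / INR (T m) * w q) - / INR (T m) * INR (T m) * M <= fr (seq 0 Q) (fun q => X (T m) q / INR (T m) * w q)).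
  2:{ assert (H := is_lim_seq_le _ _ _ _ Hle LB LA). simpl in H. apply Rle_ge. exact H. }
  intros m. specialize (key (T m)). unfold inner, vsum in key.
  fold (fr (seq 0 Q) (fun q => X (T m) q * w q)) in key.
  rewrite (fr_ext _ (fun q => X (T m) q / INR (T m) * w q) (fun q => / INR (T m) * (X (T m) q * w q))) by (intros; unfold Rdiv; ring).
  rewrite (fr_ext _ (fun q => cumA A (T m) q / INR (T m) * w q) (fun q => / INR (T m) * (cumA A (T m) q * w q))) by (intros; unfold Rdiv; ring).
  rewrite !fr_scal. specialize (INRinv (T m)).
  assert (/ INR (T m) * (fr (seq 0 Q) (fun q => cumA A (T m) q * w q) - INR (T m) * M) <= / INR (T m) * fr (seq 0 Q) (fun q => X (T m) q * w q)).
  { apply Rmult_le_compat_l; lra. }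
  lra.
Qed.
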